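(* Let $(A,+)$ be a finite abelian group with a fixed standard ppc-basis $e_1,\dots,e_r$, and let $\varepsilon_1,\varepsilon_2\in\mathrm{End}(A,+)$. Then $\varepsilon_1,\varepsilon_2$ are idempotent and commute with each other (under composition) if and only if there exist idempotent diagonal endomorphisms $\delta_1,\delta_2$ of $A$ and an automorphism $\alpha\in\mathrm{Aut}(A,+)$ with $\alpha^{-1}\varepsilon_1\alpha=\delta_1$ and $\alpha^{-1}\varepsilon_2\alpha=\delta_2$.
   Context: Every finite abelian group $A$ is a direct sum of cyclic groups of prime power order. A ppc-basis (prime power cyclic basis) of $A$ is a set $\{x_1,\dots,x_r\}$ of elements with $A=\langle x_1\rangle\oplus\cdots\oplus\langle x_r\rangle$ and each $\langle x_i\rangle$ cyclic of prime power order; the number $r$ (an isomorphism invariant) is the ppc-rank of $A$. Fix one such basis $e_1,\dots,e_r$, the standard ppc-basis. An endomorphism $\delta$ of $A$ is diagonal if for each $i$ there is $d_i\in\mathbb{Z}_{|e_i|}$ with $\delta(e_i)=d_ie_i$. An endomorphism $\varepsilon$ is idempotent if $\varepsilon\circ\varepsilon=\varepsilon$. Maps are composed as functions: $\alpha\beta=\alpha\circ\beta$. *)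

(* Defs.v *)
From HB Require Import structures.
From mathcomp Require Import all_boot all_order all_algebra all_fingroup.
Set Implicit Arguments. Unset Strict Implicit. Unset Printing Implicit Defensive.
Import GRing.Theory.
Local Open Scope ring_scope.

(* The finite abelian group (A,+) is the carrier of a finite Z-module V. *)

Definition zorder (V : finZmodType) (x : V) : nat := #[x]%g.

Definition is_endo (V : finZmodType) (f : V -> V) : Prop :=
  forall x y, f (x + y) = f x + f y.

Definition is_idempotent (V : finZmodType) (f : V -> V) : Prop :=
  forall x, f (f x) = f x.

Definition ppc_basis (V : finZmodType) (r : nat) (e : 'I_r -> V) : Prop :=
  (forall i, exists p k, prime p /\ (0 < k)%N /\ zorder (e i) = (p ^ k)%N) /\
  (forall x : V, exists c : 'I_r -> nat,
      (forall i, c i < zorder (e i))%N /\ x = \sum_(i < r) e i *+ c i) /\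
  (forall c c' : 'I_r -> nat,
      (forall i, c i < zorder (e i))%N -> (forall i, c' i < zorder (e i))%N ->
      \sum_(i < r) e i *+ c i = \sum_(i < r) e i *+ c' i -> forall i, c i = c' i).

(* f is diagonal w.r.t. e: f(e_i) = d_i e_i with d_i in Z_{|e_i|}
   (represented by a natural number d_i < |e_i|) *)
Definition is_diagonal (V : finZmodType) (r : nat) (e : 'I_r -> V) (f : V -> V) : Prop :=
  exists d : 'I_r -> nat, forall i, (d i < zorder (e i))%N /\ f (e i) = e i *+ d i.

(* Main.v *)
Require Import Defs.
From HB Require Import structures.
From mathcomp Require Import all_boot all_order all_algebra all_fingroup.
From mathcomp Require Import all_solvable.
From mathcomp Require Import zify.
From Stdlib Require Import ClassicalEpsilon.
Set Implicit Arguments. Unset Strict Implicit. Unset Printing Implicit Defensive.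
Import GRing.Theory.
Local Open Scope ring_scope.

Lemma endo0 (V : finZmodType) (f : V -> V) : is_endo f -> f 0 = 0.
Proof. by move=> h; apply: (addrI (f 0)); rewrite -h !addr0. Qed.

Lemma endoN (V : finZmodType) (f : V -> V) x : is_endo f -> f (- x) = - f x.
Proof. by move=> h; apply: (addrI (f x)); rewrite -h !subrr endo0. Qed.

Lemma endoB (V : finZmodType) (f : V -> V) x y : is_endo f -> f (x - y) = f x - f y.
Proof. by move=> h; rewrite h endoN. Qed.

Lemma endoMn (V : finZmodType) (f : V -> V) x n : is_endo f -> f (x *+ n) = f x *+ n.
Proof. by move=> h; elim: n => [|n IH]; rewrite ?mulr0n ?endo0 // !mulrS h IH. Qed.

Lemma endo_sum (V : finZmodType) (f : V -> V) (I : Type) (s : seq I) (P : pred I) (F : I -> V) :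
  is_endo f -> f (\sum_(i <- s | P i) F i) = \sum_(i <- s | P i) f (F i).
Proof. by move=> h; elim/big_rec2: _ => [|i y1 y2 _ <-]; [exact: endo0 | rewrite h]. Qed.

Lemma sum_prodg (V : finZmodType) (I : Type) (s : seq I) (P : pred I) (F : I -> V) :
  \sum_(i <- s | P i) F i = (\prod_(i <- s | P i) F i)%g.
Proof. by elim: s => [|i s IH]; rewrite ?big_nil ?big_cons //; case: (P i); rewrite IH. Qed.

Lemma mem_bigdprodL (V : finZmodType) (b : seq V) (G : {group V}) x :
  (\big[dprod/1]_(y <- b) <[y]>)%g = G -> x \in b -> x \in G.
Proof.
move=> defG xb; rewrite -(bigdprodWY defG); case/splitPr: xb => bl br.
by rewrite mem_gen // big_cat big_cons !inE cycle_id orbT.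
Qed.



Lemma gen_split (V : finZmodType) (F : nat -> V -> V) (Q : V -> Prop) :
  (forall k, is_endo (F k)) -> (forall k, is_idempotent (F k)) ->
  (forall k l x, F k (F l x) = F l (F k x)) ->
  (forall H : {group V}, exists2 b : seq V, (\big[dprod/1]_(x <- b) <[x]>)%g = H &
      forall x, x \in b -> x != 0 /\ Q x) ->
  forall n (G : {group V}), (forall k x, (k < n)%N -> x \in G -> F k x \in G) ->
  exists2 b : seq V, (\big[dprod/1]_(x <- b) <[x]>)%g = G &
    forall x, x \in b -> [/\ x != 0, Q x & forall k, (k < n)%N -> F k x = x \/ F k x = 0].
Proof.
move=> hE hI hC base n; elim: n => [|n IH] G stab.
  have [b hb hq] := base G; exists b => // x /hq [? ?]; split=> //.
set f := F n.
have g1 : group_set [set x in G | f x == x].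
  apply/group_setP; split; first by rewrite inE group1 /=; apply/eqP; exact: (endo0 (hE n)).
  move=> x y; rewrite !inE => /andP[Gx /eqP fx] /andP[Gy /eqP fy].
  by rewrite groupM //= -[(x * y)%g]/(x + y) /f (hE n) -/f fx fy.
have g0 : group_set [set x in G | f x == 0].
  apply/group_setP; split; first by rewrite inE group1 /=; apply/eqP; exact: (endo0 (hE n)).
  move=> x y; rewrite !inE => /andP[Gx /eqP fx] /andP[Gy /eqP fy].
  by rewrite groupM //= -[(x * y)%g]/(x + y) /f (hE n) -/f fx fy addr0.
pose G1 := Group g1; pose G0 := Group g0.
have [b1 hb1 hq1] : exists2 b : seq V, (\big[dprod/1]_(x <- b) <[x]>)%g = G1 &
    forall x, x \in b -> [/\ x != 0, Q x & forall k, (k < n)%N -> F k x = x \/ F k x = 0].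
  apply: IH => k x kn; rewrite !inE => /andP[Gx /eqP fx].
  by rewrite stab ?(ltn_trans kn) //= /f hC -/f fx.
have [b0 hb0 hq0] : exists2 b : seq V, (\big[dprod/1]_(x <- b) <[x]>)%g = G0 &
    forall x, x \in b -> [/\ x != 0, Q x & forall k, (k < n)%N -> F k x = x \/ F k x = 0].
  apply: IH => k x kn; rewrite !inE => /andP[Gx /eqP fx].
  by rewrite stab ?(ltn_trans kn) //= /f hC -/f fx endo0.
exists (b1 ++ b0).
  rewrite big_cat /= hb1 hb0 dprodE; last first.
  - apply/eqP; rewrite eqEsubset sub1G andbT; apply/subsetP => y.
    rewrite !inE => /andP[/andP[_ /eqP a] /andP[_ /eqP b]].
    by rewrite -a b.
  - by apply/subsetP=> y _; apply/centP=> z _; exact: FinRing.zmod_mulgC.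
  apply/eqP; rewrite eqEsubset; apply/andP; split.
    by rewrite mul_subG //; apply/subsetP => y; rewrite inE => /andP[].
  apply/subsetP => x Gx; apply/mulsgP; exists (f x) (x - f x).
  - by rewrite inE stab //= /f hI.
  - by rewrite inE groupM ?groupV ?stab //= /f endoB // hI subrr.
  - by change (x = f x + (x - f x)); rewrite addrC subrK.
move=> x; rewrite mem_cat => /orP[xb|xb].
  have [nz q eig] := hq1 x xb; split=> // k; rewrite ltnS leq_eqVlt => /orP[/eqP->|/eig //].
  have := mem_bigdprodL hb1 xb; rewrite inE => /andP[_ /eqP]; by left.
have [nz q eig] := hq0 x xb; split=> // k; rewrite ltnS leq_eqVlt => /orP[/eqP->|/eig //].
have := mem_bigdprodL hb0 xb; rewrite inE => /andP[_ /eqP]; by right.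
Qed.



Lemma ppc_exists (V : finZmodType) (H : {group V}) :
  exists2 b : seq V, (\big[dprod/1]_(x <- b) <[x]>)%g = H &
    forall x, x \in b -> x != 0 /\ exists p k, prime p /\ #[x]%g = (p ^ k.+1)%N.
Proof.
pose F (p : nat) (x : V) := (x.`_p)%g.
have hE k : is_endo (F k).
  by move=> x y; rewrite /F -[x + y]/(x * y)%g consttM //; exact: FinRing.zmod_mulgC.
have hI k : is_idempotent (F k).
  by move=> x; rewrite /F constt_p_elt // p_elt_constt.
have hC k l x : F k (F l x) = F l (F k x).
  rewrite /F; have [->//|nkl] := eqVneq k l.
  have t (a b : nat) (y : V) : a != b -> ((y.`_a).`_b)%g = 1%g.
    move=> nab; apply/constt1P; apply: sub_p_elt (p_elt_constt a y) => z.
    have e1 : (z \in (a : nat_pred)) = (z == a) by [].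
    have e2 : (z \in (b : nat_pred)^') = (z != b) by [].
    by rewrite e1 e2 => /eqP ->.
  by rewrite !t // eq_sym.
have base (K : {group V}) : exists2 b : seq V, (\big[dprod/1]_(x <- b) <[x]>)%g = K &
      forall x, x \in b -> x != 0 /\ True.
  have [b hb ho] := abelian_structure (FinRing.zmod_abelian K).
  exists b => // x xb; split=> //.
  have := abelian_type_gt1 K; rewrite -ho => /allP /(_ #[x]%g).
  by rewrite map_f // => /(_ isT); rewrite /= order_gt1.
have stab k x : (k < #|V|.+1)%N -> x \in H -> F k x \in H.
  move=> _ Hx; apply: (subsetP _ _ (cycle_constt k x)); by rewrite cycle_subG.
have [b hb hq] := gen_split hE hI hC base stab.
exists b => // x /hq [nz _ eig]; split=> //.
have o1 : (1 < #[x]%g)%N by rewrite order_gt1.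
set p := pdiv #[x]%g.
have pp : prime p by rewrite pdiv_prime.
have pV : (p < #|V|.+1)%N.
  rewrite ltnS (leq_trans (pdiv_leq (ltnW o1))) //.
  by rewrite -cardsT dvdn_leq ?cardG_gt0 // order_dvdG ?in_setT.
have pd : (0 < logn p #[x]%g)%N by rewrite logn_gt0 mem_primes pp (ltnW o1) pdiv_dvd.
case: (eig p pV) => [fx|fx].
  have : (p.-elt x)%g by rewrite -fx /F p_elt_constt.
  case/p_natP=> k xk; exists p, k.-1; split=> //; rewrite xk prednK //.
  by move: pd; rewrite xk pfactorK //.
exfalso; have := order_constt p x; rewrite -/(F p x) fx -[0]/(1%g : V) order1 p_part.
move=> /esym/eqP; rewrite -(expn0 p) eqn_exp2l ?prime_gt1 //; move: pd; case: (logn _ _) => //.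
Qed.



Lemma count_sub (T : Type) (a b : pred T) (s : seq T) :
  (forall y, b y -> a y) ->
  count (fun y => a y && ~~ b y) s = (count a s - count b s)%N.
Proof.
move=> ba; elim: s => //= y s IH; rewrite IH.
have : (count b s <= count a s)%N by apply: sub_count => z; exact: ba.
case Ay: (a y); case By: (b y) => /= h.
- by rewrite !add1n subSS add0n.
- by rewrite add0n add1n subSn.
- by rewrite ba in Ay.
- by [].
Qed.

Lemma pp_elem p k q j : prime p -> prime q ->
  ((q ^ j.+1)%N == (p ^ k.+1)%N) =
    ((k < logn p (q ^ j.+1))%N && ~~ (k.+1 < logn p (q ^ j.+1))%N).
Proof.
move=> pp pq; have [<-|nqp] := eqVneq q p.
  by rewrite eqn_exp2l ?prime_gt1 // pfactorK //; lia.
have npq : (p == q) = false by rewrite eq_sym (negbTE nqp).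
rewrite lognX logn_prime // npq muln0 /=.
apply/negbTE/negP => /eqP h; have := pfactorK k.+1 pp; rewrite -h lognX logn_prime //.
by rewrite npq muln0.
Qed.

Lemma order_count (V : finZmodType) (b1 b2 : seq V) :
  (\big[dprod/1]_(x <- b1) <[x]>)%g = [set: V] ->
  (\big[dprod/1]_(x <- b2) <[x]>)%g = [set: V] ->
  (forall x, x \in b1 ++ b2 -> exists p k, prime p /\ #[x]%g = (p ^ k.+1)%N) ->
  perm_eq (map order b1) (map order b2).
Proof.
move=> d1 d2 hpp; rewrite /perm_eq; apply/allP => m; rewrite -map_cat => /mapP [x xb ->].
have [p [k [pp ox]]] := hpp x xb.
have key (b : seq V) : (\big[dprod/1]_(x <- b) <[x]>)%g = [set: V] ->
    {subset b <= b1 ++ b2} ->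
    count (pred1 #[x]%g) (map order b) =
    (logn p #|'Ohm_k.+1([set: V]) : 'Ohm_k([set: V])|%g -
     logn p #|'Ohm_k.+2([set: V]) : 'Ohm_k.+1([set: V])|%g)%N.
  move=> db sb; rewrite -!(count_logn_dprod_cycle _ _ db) count_map -count_sub; last first.
    by move=> y /= h; apply: ltn_trans h.
  apply: eq_in_count => y yb /=; rewrite ox.
  have [q [j [pq oy]]] := hpp y (sb y yb); rewrite oy; exact: pp_elem.
by apply/eqP; rewrite !key // => y yb; rewrite mem_cat yb ?orbT.
Qed.



Lemma mulrn_modo (V : finZmodType) (y : V) n : y *+ (n %% #[y]%g) = y *+ n.
Proof. exact: (expg_mod_order y n). Qed.

Section Coord.
Variables (V : finZmodType) (r : nat) (e : 'I_r -> V) (he : ppc_basis e)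
  (c : V -> 'I_r -> nat)
  (hc : forall x, (forall i, c x i < zorder (e i))%N /\ x = \sum_i e i *+ c x i).

Lemma coord_sum (m : 'I_r -> nat) i : c (\sum_j e j *+ m j) i = (m i %% zorder (e i))%N.
Proof.
have [_ [_ hu]] := he; set x := \sum_j e j *+ m j.
apply: (hu (c x) (fun i => m i %% zorder (e i))%N) => //.
- by move=> j; exact: (hc x).1.
- by move=> j; rewrite ltn_pmod // /zorder order_gt0.
rewrite -(hc x).2; apply: eq_bigr => j _; by rewrite mulrn_modo.
Qed.

Lemma coord_add x y i : c (x + y) i = ((c x i + c y i) %% zorder (e i))%N.
Proof.
have -> : x + y = \sum_j e j *+ (c x j + c y j).
  under eq_bigr do rewrite mulrnDr.
  by rewrite big_split /= -!(hc _).2.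
exact: coord_sum.
Qed.

Lemma coord_single j m i : c (e j *+ m) i = if i == j then (m %% zorder (e i))%N else 0%N.
Proof.
have -> : e j *+ m = \sum_k e k *+ (if k == j then m else 0%N).
  rewrite (bigD1 j) //= eqxx big1 ?addr0 //; move=> k /negbTE ->; exact: mulr0n.
by rewrite coord_sum; case: (i == j); rewrite ?mod0n.
Qed.

Lemma coord0 i : c 0 i = 0%N.
Proof. by have := coord_single i 0 i; rewrite mulr0n eqxx mod0n. Qed.

Lemma ppc_dprod : (\big[dprod/1]_(i : 'I_r) <[e i]>)%g = [set: V].
Proof.
have gen : (\prod_(i : 'I_r) <[e i]>%G)%G = [set: V] :> {set V}.
  rewrite bigprodGE; apply/eqP; rewrite eqEsubset subsetT /=.
  apply/subsetP => x _; rewrite (hc x).2 sum_prodg; apply: group_prod => i _.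
  apply: mem_gen; apply/bigcupP; exists i => //; exact: mem_cycle.
rewrite -gen; apply/eqP; apply/bigdprodYP => i _.
rewrite bigprodGE subsetD; apply/andP; split.
  by apply/subsetP=> y _; apply/centP=> z _; exact: FinRing.zmod_mulgC.
pose K := [set y : V | e i *+ c y i == 0].
have gK : group_set K.
  apply/group_setP; split; first by rewrite inE -[1%g]/(0 : V) coord0.
  move=> x y; rewrite !inE => /eqP hx /eqP hy.
  by rewrite -[(x * y)%g]/(x + y) coord_add /zorder mulrn_modo mulrnDr hx hy addr0.
have sub : (<< \bigcup_(j | true && (j != i)) <[e j]>%G >> \subset K)%g.
  rewrite (gen_subG _ (Group gK)); apply/bigcupsP => j /= nji.
  apply/subsetP => y /cycleP [m ->]; rewrite inE -[(e j ^+ m)%g]/(e j *+ m).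
  rewrite coord_single; have [eij|//] := eqVneq i j; by rewrite eij eqxx in nji.
apply/pred0P => y /=; apply/negbTE; apply/andP => [[yg]].
rewrite !inE => /andP [ny /cycleP [m ym]].
move: (subsetP sub y yg); rewrite inE ym -[(e i ^+ m)%g]/(e i *+ m).
rewrite coord_single eqxx /zorder mulrn_modo => h; move: ny; rewrite ym.
by rewrite -[(e i ^+ m)%g]/(e i *+ m) (eqP h) eqxx.
Qed.

End Coord.

Lemma dprod_indep (V : finZmodType) (r : nat) (g : 'I_r -> V) (m : 'I_r -> nat) :
  (\big[dprod/1]_(i : 'I_r) <[g i]>)%g = [set: V] ->
  \sum_i g i *+ m i = 0 -> forall i, (#[g i]%g %| m i)%N.
Proof.
move=> dg hs i.
have : (\big[dprod/1]_(i : 'I_r) <[g i]>%G)%g == (\prod_(i : 'I_r) <[g i]>%G)%G.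
  by rewrite bigprodGE (bigdprodWY dg) dg.
move/bigdprodYP/(_ i isT); rewrite bigprodGE subsetD => /andP [_ dis].
rewrite order_dvdn; apply/negPn/negP => ny.
have y1 : ((g i ^+ m i) \in << \bigcup_(j | true && (j != i)) <[g j]>%G >>)%g.
  have -> : (g i ^+ m i)%g = - \sum_(j | j != i) g j *+ m j.
    by apply/eqP; rewrite -addr_eq0 -[(g i ^+ m i)%g]/(g i *+ m i) -(bigD1 i (P:=predT)) //= hs.
  rewrite -[- _]/((_)^-1)%g groupV sum_prodg; apply: group_prod => j nji.
  apply: mem_gen; apply/bigcupP; exists j => //; exact: mem_cycle.
have y2 : ((g i ^+ m i) \in (<[g i]>%G)^#)%g.
  by rewrite !inE ny mem_cycle.
by move/pred0P/(_ (g i ^+ m i)%g): dis; rewrite /= y1 y2.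
Qed.



Lemma forward (V : finZmodType) (r : nat) (e : 'I_r -> V)
  (he : ppc_basis e) (eps1 eps2 : V -> V)
  (h1 : is_endo eps1) (h2 : is_endo eps2) :
  (is_idempotent eps1 /\ is_idempotent eps2 /\
   (forall x, eps1 (eps2 x) = eps2 (eps1 x))) ->
  (exists (delta1 delta2 : V -> V) (alpha alpha_inv : V -> V),
      is_endo delta1 /\ is_endo delta2 /\
      is_idempotent delta1 /\ is_idempotent delta2 /\
      is_diagonal e delta1 /\ is_diagonal e delta2 /\
      is_endo alpha /\ cancel alpha alpha_inv /\ cancel alpha_inv alpha /\
      (forall x, alpha_inv (eps1 (alpha x)) = delta1 x) /\
      (forall x, alpha_inv (eps2 (alpha x)) = delta2 x)).
Proof.
case=> [i1 [i2 c12]].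
pose F (k : nat) : V -> V := match k with 0 => eps1 | 1 => eps2 | _ => id end.
have hE k : is_endo (F k) by case: k => [|[|k]] //= x y.
have hI k : is_idempotent (F k) by case: k => [|[|k]].
have hC k l x : F k (F l x) = F l (F k x).
  by case: k => [|[|k]]; case: l => [|[|l]] //=; rewrite c12.
have [b hb hq] := gen_split hE hI hC (@ppc_exists V) (n:=2) (G:=[set: V]%G)
   (fun _ _ _ _ => in_setT _).
have [c hc] : exists c : V -> 'I_r -> nat,
    forall x, (forall i, c x i < zorder (e i))%N /\ x = \sum_i e i *+ c x i.
  have ex x := he.2.1 x.
  exists (fun x => proj1_sig (constructive_indefinite_description _ (ex x))).
  move=> x; exact: (proj2_sig (constructive_indefinite_description _ (ex x))).
set eb := map e (enum 'I_r).
have deb : (\big[dprod/1]_(x <- eb) <[x]>)%g = [set: V].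
  by rewrite big_map big_enum /= (ppc_dprod he hc).
have ppe i : exists p k, prime p /\ #[e i]%g = (p ^ k.+1)%N.
  have [p [k [pp [k0 ek]]]] := he.1 i; exists p, k.-1; rewrite prednK //.
have o1 i : (1 < zorder (e i))%N.
  have [p [k [pp ek]]] := ppe i; rewrite /zorder ek -[1%N](expn0 p) ltn_exp2l ?prime_gt1 //.
have pe : perm_eq (map order eb) (map order b).
  apply: order_count deb hb _ => x; rewrite mem_cat => /orP [/mapP [i _ ->] | xb].
    exact: ppe.
  by have [_ q _] := hq x xb.
have [Is hIs hs] := perm_iotaP 0%N pe.
rewrite size_map in hIs.
have sIs : size Is = r.
  rewrite -(size_map (nth 0%N (map order b))) -hs /eb !size_map.
  by rewrite -enumT size_enum_ord.
have Isb (i : 'I_r) : (nth 0%N Is i < size b)%N.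
  have : nth 0%N Is i \in iota 0 (size b) by rewrite -(perm_mem hIs) mem_nth // sIs.
  by rewrite mem_iota add0n.
pose g (i : 'I_r) := nth 0 b (nth 0%N Is i).
have gb i : g i \in b by exact: mem_nth.
have og i : #[g i]%g = #[e i]%g.
  have := congr1 (fun s => nth 0%N s i) hs.
  rewrite /= (nth_map 0); last by rewrite size_map size_enum_ord.
  rewrite (nth_map i); last by rewrite size_enum_ord.
  rewrite nth_ord_enum => ->.
  rewrite (nth_map 0%N) ?sIs // (nth_map 0) //.
have dg : (\big[dprod/1]_(i : 'I_r) <[g i]>)%g = [set: V].
  rewrite -hb (big_nth 0) /index_iota subn0 -(perm_big _ hIs) (big_nth 0%N) sIs.
  by rewrite big_mkord.
pose alpha x := \sum_i g i *+ c x i.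
have aE : is_endo alpha.
  move=> x y; rewrite /alpha -big_split; apply: eq_bigr => j _ /=.
  by rewrite (coord_add he hc) /zorder -og mulrn_modo mulrnDr.
have ce i j : c (e i) j = if j == i then 1%N else 0%N.
  rewrite -[e i]mulr1n (coord_single he hc); case: eqP => // ->.
  by rewrite modn_small // o1.
have ae i : alpha (e i) = g i.
  rewrite /alpha (bigD1 i) //= ce eqxx big1 ?addr0 // => j nji.
  by rewrite ce (negbTE nji).
have ainj : injective alpha.
  have k0 x : alpha x = 0 -> x = 0.
    move=> ax; have dv := dprod_indep dg ax.
    rewrite (hc x).2 big1 // => i _; have := dv i; rewrite og.
    have := (hc x).1 i; rewrite /zorder; case: (c x i) => [|n] // lt dv'.
    by have := dvdn_leq (ltn0Sn n) dv'; rewrite leqNgt lt.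
  move=> x y axy; apply/eqP; rewrite -subr_eq0; apply/eqP/k0.
  by rewrite endoB // axy subrr.
case: (injF_bij ainj) => ai aK Ka.
have aiE : is_endo ai by move=> x y; apply: ainj; rewrite aE !Ka.
have diag (eps : V -> V) k : F k = eps -> (k < 2)%N ->
    is_diagonal e (fun x => ai (eps (alpha x))).
  move=> Fk k2; exists (fun i => if eps (g i) == g i then 1%N else 0%N) => i; split.
    by case: ifP => _; [exact: o1 | exact: ltn_trans (o1 i)].
  rewrite ae; have [_ _ eig] := hq _ (gb i); have := eig k k2; rewrite Fk.
  case: eqP => [-> _| ne [//|->]]; first by rewrite -ae aK mulr1n.
  by rewrite mulr0n endo0.
exists (fun x => ai (eps1 (alpha x))), (fun x => ai (eps2 (alpha x))), alpha, ai.
split; first by move=> x y; rewrite aE h1 aiE.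
split; first by move=> x y; rewrite aE h2 aiE.
split; first by move=> x; rewrite Ka i1.
split; first by move=> x; rewrite Ka i2.
split; first exact: (diag eps1 0%N).
split; first exact: (diag eps2 1%N).
by [].
Qed.


Lemma backward (V : finZmodType) (r : nat) (e : 'I_r -> V)
  (he : ppc_basis e) (eps1 eps2 : V -> V) :
  (exists (delta1 delta2 : V -> V) (alpha alpha_inv : V -> V),
      is_endo delta1 /\ is_endo delta2 /\
      is_idempotent delta1 /\ is_idempotent delta2 /\
      is_diagonal e delta1 /\ is_diagonal e delta2 /\
      is_endo alpha /\ cancel alpha alpha_inv /\ cancel alpha_inv alpha /\
      (forall x, alpha_inv (eps1 (alpha x)) = delta1 x) /\
      (forall x, alpha_inv (eps2 (alpha x)) = delta2 x)) ->
  (is_idempotent eps1 /\ is_idempotent eps2 /\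
   (forall x, eps1 (eps2 x) = eps2 (eps1 x))).
Proof.
case=> [d1 [d2 [a [ai [dE1 [dE2 [di1 [di2 [[a1 ha1] [[a2 ha2] [aE [aK [Ka [hd1 hd2]]]]]]]]]]]]]].
have e1 x : eps1 x = a (d1 (ai x)) by rewrite -hd1 !Ka.
have e2 x : eps2 x = a (d2 (ai x)) by rewrite -hd2 !Ka.
have dc y : d1 (d2 y) = d2 (d1 y).
  have [cy [_ ->]] := he.2.1 y.
  rewrite !endo_sum //; apply: eq_bigr => i _.
  rewrite !endoMn // (ha2 i).2 (ha1 i).2 !endoMn // (ha2 i).2 (ha1 i).2.
  by rewrite -!mulrnA; congr (_ *+ _); nia.
split; first by move=> x; rewrite !e1 aK di1.
split; first by move=> x; rewrite !e2 aK di2.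
by move=> x; rewrite e1 e2 e1 e2 !aK dc.
Qed.

Local Close Scope ring_scope.

Theorem theorem5p9 (V : finZmodType) (r : nat) (e : 'I_r -> V)
  (he : ppc_basis e) (eps1 eps2 : V -> V)
  (h1 : is_endo eps1) (h2 : is_endo eps2) :
  (is_idempotent eps1 /\ is_idempotent eps2 /\
   (forall x, eps1 (eps2 x) = eps2 (eps1 x)))
  <->
  (exists (delta1 delta2 : V -> V) (alpha alpha_inv : V -> V),
      is_endo delta1 /\ is_endo delta2 /\
      is_idempotent delta1 /\ is_idempotent delta2 /\
      is_diagonal e delta1 /\ is_diagonal e delta2 /\
      is_endo alpha /\ cancel alpha alpha_inv /\ cancel alpha_inv alpha /\
      (forall x, alpha_inv (eps1 (alpha x)) = delta1 x) /\
      (forall x, alpha_inv (eps2 (alpha x)) = delta2 x)).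
Proof.
split; [exact: forward | exact: backward].
Qed.
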